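(* Let $\|\cdot\|_{F_n}$ ($n\ge1$) and $\|\cdot\|_F$ be $F$-norms on $\mathbb{R}^{d+1}$. Then $\|\mathbf{x}\|_{F_n}\to\|\mathbf{x}\|_F$ for every $\mathbf{x}\in\mathbb{R}^{d+1}$ if and only if $d_{H,\|\cdot\|}(S^+_{\|\cdot\|_{F_n}},S^+_{\|\cdot\|_F})\to0$, where $\|\cdot\|$ is any norm on $\mathbb{R}^{d+1}$.
   Context: Condition $(\mathcal{H})$ on $\mathbf{X}=(X_1,\dots,X_d)$: each $X_i$ is a.s. nonnegative with $0<E(X_i)<\infty$. For such $\mathbf{X}$ with distribution function $F$, $\|\mathbf{x}\|_F=E(\max(|x_0|,|x_1|X_1,\dots,|x_d|X_d))$; an $F$-norm is a norm on $\mathbb{R}^{d+1}$ of this form. For an $F$-norm, $S^+_{\|\cdot\|_F}:=\{\mathbf{x}\in[0,\infty)^{d+1}:\|\mathbf{x}\|_F=1\}$. For a norm $\|\cdot\|$ on $\mathbb{R}^{d+1}$ and sets $A,B\subset\mathbb{R}^{d+1}$, $d_{H,\|\cdot\|}(A,B)=\max\{\sup_{\mathbf{y}\in B}\inf_{\mathbf{x}\in A}\|\mathbf{x}-\mathbf{y}\|,\sup_{\mathbf{x}\in A}\inf_{\mathbf{y}\in B}\|\mathbf{x}-\mathbf{y}\|\}$. *)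

(* Defs.v *)
From HB Require Import structures.
From mathcomp Require Import all_boot all_order all_algebra.
From mathcomp Require Import all_classical all_reals all_analysis.
Set Implicit Arguments. Unset Strict Implicit. Unset Printing Implicit Defensive.
Import Order.TTheory GRing.Theory Num.Theory.
Import numFieldNormedType.Exports.
Local Open Scope classical_set_scope.
Local Open Scope ring_scope.

(* Vectors of R^{d+1} are row vectors 'rV[R]_(d.+1); coordinate x_0 is
   x ord0 ord0 and coordinate x_{i+1} (i < d) is x ord0 (lift ord0 i). *)

Section Defs.
Context {R : realType} {dd : nat}.

(* Condition (H) on X = (X_1,...,X_d) (X i stands for X_{i+1}):
   each X_i is a random variable, a.s. nonnegative, with 0 < E X_i < oo. *)
Definition condH {dT : measure_display} {T : measurableType dT}
  (P : probability T R) (X : 'I_dd -> T -> R) : Prop :=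
  forall i, [/\ measurable_fun setT (X i),
                {ae P, forall w, 0 <= X i w},
                P.-integrable setT (EFin \o X i)
              & (0 < 'E_P[X i])%E].

Definition Fnorm_of {dT : measure_display} {T : measurableType dT}
  (P : probability T R) (X : 'I_dd -> T -> R) (x : 'rV[R]_(dd.+1)) : \bar R :=
  'E_P[fun w => \big[Num.max/`|x ord0 ord0|]_(i < dd)
                   (`|x ord0 (lift ord0 i)| * X i w)].

Definition is_Fnorm (N : 'rV[R]_(dd.+1) -> R) : Prop :=
  exists (dT : measure_display) (T : measurableType dT)
         (P : probability T R) (X : 'I_dd -> T -> R),
    condH P X /\ forall x, (N x)%:E = Fnorm_of P X x.

Definition is_norm (nu : 'rV[R]_(dd.+1) -> R) : Prop :=
  [/\ forall x y, nu (x + y) <= nu x + nu y,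
      forall (a : R) x, nu (a *: x) = `|a| * nu x
    & forall x, nu x = 0 -> x = 0].

Definition Splus (N : 'rV[R]_(dd.+1) -> R) : set 'rV[R]_(dd.+1) :=
  [set x : 'rV[R]_(dd.+1) | (forall i, 0 <= x ord0 i) /\ N x = 1].

Definition hausdorff (nu : 'rV[R]_(dd.+1) -> R) (A B : set 'rV[R]_(dd.+1))
  : \bar R :=
  maxe (ereal_sup [set ereal_inf [set (nu (x - y))%:E | x in A] | y in B])
       (ereal_sup [set ereal_inf [set (nu (x - y))%:E | y in B] | x in A]).

End Defs.

(* Main.v *)
Require Import Defs.
From HB Require Import structures.
From mathcomp Require Import all_boot all_order all_algebra.
From mathcomp Require Import all_classical all_reals all_analysis.
From mathcomp Require Import measurable_realfun lebesgue_integral_nonneg.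
From mathcomp Require Import ring lra.
From mathcomp Require Import finmap.
Import Order.TTheory GRing.Theory Num.Theory.
Import numFieldNormedType.Exports.
Local Open Scope classical_set_scope.
Local Open Scope ring_scope.
Set Implicit Arguments. Unset Strict Implicit.

Section Gauge.
Variables (R : realType) (n : nat).
Local Notation V := 'rV[R]_n.+1.
Implicit Types x y : V.

Definition seminorm (N : V -> R) :=
  (forall x y, N (x + y) <= N x + N y) /\ (forall (a : R) x, N (a *: x) = `|a| * N x).

Lemma coord_le (x : V) j : `|x ord0 j| <= `|x|.
Proof.
rewrite [leRHS]/Num.norm /= mx_normrE; apply/bigmax_geP; right => /=.
by exists (ord0, j).
Qed.

Lemma norm_le (x : V) c : 0 <= c -> (forall j, `|x ord0 j| <= c) -> `|x| <= c.
Proof.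
move=> c0 H; rewrite [leLHS]/Num.norm /= mx_normrE; apply: bigmax_le => // -[i j] _.
by rewrite /= (ord1 i).
Qed.

Section Semi.
Variable N : V -> R.
Hypothesis sN : seminorm N.

Lemma sn0 : N 0 = 0.
Proof. by have := sN.2 0 0; rewrite scale0r normr0 mul0r. Qed.

Lemma snN x : N (- x) = N x.
Proof. by rewrite -scaleN1r sN.2 normrN normr1 mul1r. Qed.

Lemma sn_ge0 x : 0 <= N x.
Proof.
have := sN.1 x (- x); rewrite subrr sn0 snN => h.
by rewrite -(@pmulr_rge0 _ 2) // mulr2n mulrDl mul1r.
Qed.

Lemma sn_sum (I : Type) (r : seq I) (P : pred I) (F : I -> V) :
  N (\sum_(i <- r | P i) F i) <= \sum_(i <- r | P i) N (F i).
Proof.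
elim/big_rec2: _ => [|i y1 y2 _ IH]; first by rewrite sn0.
by apply: le_trans (sN.1 _ _) _; rewrite lerD2l.
Qed.

Lemma sn_upper x : N x <= \sum_j `|x ord0 j| * N 'e_j.
Proof.
rewrite {1}(row_sum_delta x); apply: le_trans (sn_sum _ _ _) _.
by apply: ler_sum => j _; rewrite sN.2.
Qed.

Lemma sn_upper_norm x : N x <= `|x| * \sum_j N 'e_j.
Proof.
apply: le_trans (sn_upper x) _; rewrite mulr_sumr; apply: ler_sum => j _.
by apply: ler_wpM2r; [exact: sn_ge0|exact: coord_le].
Qed.

Lemma sn_lip x y : `|N x - N y| <= N (x - y).
Proof.
have h1 := sN.1 x (y - x); rewrite addrC subrK -opprB snN in h1.
have h2 := sN.1 (x - y) y; rewrite subrK in h2.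
rewrite ler_norml; apply/andP; split; lra.
Qed.

End Semi.

Definition gauge (N : V -> R) :=
  [/\ seminorm N, (forall x y : V, (forall j, `|x ord0 j| <= `|y ord0 j|) -> N x <= N y)
   & forall j, 0 < N 'e_j].

Section GaugeProps.
Variable N : V -> R.
Hypothesis gN : gauge N.

Lemma g_lower x j : `|x ord0 j| * N 'e_j <= N x.
Proof.
case: gN => [[_ hom] mono _]; rewrite -hom; apply: mono => k.
rewrite !mxE eqxx andTb; case: eqVneq => [->|_]; first by rewrite mulr1.
by rewrite mulr0 normr0.
Qed.

Lemma g_abs x : N (map_mx Num.norm x) = N x.
Proof.
case: gN => [_ mono _]; apply/le_anti/andP; split; apply: mono => j;
by rewrite mxE normr_id.
Qed.

Lemma g_eq0 x : N x = 0 -> x = 0.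
Proof.
move=> h; apply/rowP => j; rewrite mxE; have := g_lower x j; rewrite h => h2.
have m0 : 0 < N (delta_mx 0 j) by case: gN => _ _; apply. have a0 := normr_ge0 (x ord0 j).
have : `|x ord0 j| <= 0 by nra.
by rewrite normr_le0 => /eqP.
Qed.

End GaugeProps.

Lemma nu_lower nu : seminorm nu -> (forall x, nu x = 0 -> x = 0) ->
  exists2 c, 0 < c & forall x : V, c * `|x| <= nu x.
Proof.
move=> snu def.
set C := \sum_j nu 'e_j.
have C0 : 0 <= C by apply: sumr_ge0 => j _; exact: sn_ge0.
have cont : continuous nu.
  move=> x; apply/(@cvgrPdist_lt _ _ _ (nbhs x) (nbhs_filter x)) => e e0.
  have e1 : 0 < e / (C + 1) by rewrite divr_gt0 // ltr_wpDl.
  near=> y.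
  have hy : `|x - y| < e / (C + 1).
    by near: y; exact: (@cvgr_dist_lt _ _ _ (nbhs x) (nbhs_filter x) id x (@cvg_id _ (nbhs x)) _ e1).
  have h1 := sn_lip snu x y; have h2 := sn_upper_norm snu (x - y).
  have h3 : `|x - y| * (C + 1) < e by rewrite -ltr_pdivlMr // ltr_wpDl.
  have h4 := normr_ge0 (x - y).
  fold C in h2; nra.
pose S := [set x : V | `|x| = 1].
have Sc : compact S.
  apply: bounded_closed_compact.
    rewrite /bounded_set /= /bounded_near; near=> M => x /= Sx.
    rewrite Sx; near: M; exact: nbhs_pinfty_ge.
  apply: (@preimage_closed V R (@Num.norm _ V) [set r : R | r = 1]); last exact: closed_eq.
  by move=> x _; exact: norm_continuous.
have e0S : S 'e_(0 : 'I_n.+1).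
  rewrite /S /=; apply/le_anti/andP; split.
    by apply: norm_le => // j; rewrite mxE; case: (_ && _) => /=; rewrite ?normr1 ?normr0.
  by apply: le_trans (coord_le _ 0); rewrite mxE !eqxx normr1.
have [c cS cmin] := compact_EVT_min (ex_intro _ _ e0S) Sc (@continuous_subspaceT _ _ S nu cont).
have cS' : S c by exact: set_mem cS.
exists (nu c).
  rewrite lt_def sn_ge0 // andbT; apply/eqP => /def c0.
  by move: cS'; rewrite /S /= c0 normr0 => /eqP; rewrite eq_sym oner_eq0.
move=> x; have [->|x0] := eqVneq x 0; first by rewrite normr0 mulr0 sn0.
have nx : 0 < `|x| by rewrite normr_gt0.
have Sx : S (`|x|^-1 *: x).
  by rewrite /S /= normrZ normfV normr_id mulVf // gt_eqF.
have := cmin _ (mem_set Sx); rewrite snu.2 normfV normr_id => h.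
rewrite mulrC -ler_pdivlMl //.
Unshelve. all: by end_near.
Qed.

End Gauge.
Unset Implicit Arguments.

Section Haus.
Variables (R : realType) (n : nat).
Local Notation V := 'rV[R]_n.+1.
Implicit Types x y : V.
Variable nu : V -> R.
Hypothesis nu0 : forall x, 0 <= nu x.

Lemma haus_le (A B : set V) e :
  (forall y, B y -> exists2 x, A x & nu (x - y) <= e) ->
  (forall x, A x -> exists2 y, B y & nu (x - y) <= e) ->
  (hausdorff nu A B <= e%:E)%E.
Proof.
move=> h1 h2; rewrite /hausdorff ge_max; apply/andP; split;
  apply: ge_ereal_sup => _ [z Bz <-]; apply: ge_ereal_inf.
- by have [x Ax hx] := h1 _ Bz; exists (nu (x - z))%:E => //; exists x.
- by have [y By hy] := h2 _ Bz; exists (nu (z - y))%:E => //; exists y.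
Qed.

Lemma haus_ge0 (A B : set V) y0 : B y0 -> (0 <= hausdorff nu A B)%E.
Proof.
move=> By0; rewrite /hausdorff le_max; apply/orP; left.
apply: le_ereal_sup_tmp; exists (ereal_inf [set (nu (x - y0))%:E | x in A]).
  by exists y0.
by apply: le_ereal_inf_tmp => _ [x _ <-]; rewrite lee_fin.
Qed.

Lemma haus_lt (A B : set V) e y : (hausdorff nu A B < e%:E)%E -> B y ->
  exists2 x, A x & nu (x - y) < e.
Proof.
rewrite /hausdorff gt_max => /andP[h _] By.
have : (ereal_inf [set (nu (x - y))%:E | x in A] < e%:E)%E.
  apply: le_lt_trans h; apply: le_ereal_sup_tmp.
  by exists (ereal_inf [set (nu (x - y))%:E | x in A]) => //; exists y.
by move=> /ereal_inf_lt [_ [x Ax <-]]; rewrite lte_fin => ?; exists x.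
Qed.

End Haus.

Lemma cv_to0 (R : realType) (h : nat -> \bar R) :
  (forall e : R, 0 < e -> \forall k \near \oo, (0 <= h k <= e%:E)%E) ->
  h @ \oo --> 0%E.
Proof.
move=> H; apply/fine_cvgP; split.
  have [k _ hk] := H 1 ltr01; exists k => // m km.
  have /andP[a b] := hk m km.
  by rewrite ge0_fin_numE // (le_lt_trans b) // ltry.
apply/cvgrPdist_le => e e0; have [k _ hk] := H e e0; exists k => // m km /=.
have /andP[a b] := hk m km.
have fm : h m \is a fin_num by rewrite ge0_fin_numE // (le_lt_trans b) // ltry.
rewrite sub0r normrN ger0_norm; first by rewrite -lee_fin fineK.
by rewrite -lee_fin fineK.
Qed.

Lemma cv_from0 (R : realType) (h : nat -> \bar R) :
  h @ \oo --> 0%E ->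
  forall e : R, 0 < e -> \forall k \near \oo, (h k < e%:E)%E.
Proof.
move=> /fine_cvgP [hf hc] e e0.
have hd := @cvgr_dist_lt _ _ _ _ _ _ _ hc _ e0.
near=> k.
have fk : h k \is a fin_num by near: k; exact: hf.
have : `|0 - fine (h k)| < e by near: k; exact: hd.
rewrite sub0r normrN => /(le_lt_trans (ler_norm _)).
by rewrite -lte_fin fineK.
Unshelve. all: by end_near.
Qed.
Set Implicit Arguments. Unset Strict Implicit.

Section Main.
Variables (R : realType) (n : nat).
Local Notation V := 'rV[R]_n.+1.
Implicit Types x y : V.
Implicit Types N nu : V -> R.

Lemma g_sn N : gauge N -> seminorm N. Proof. by case. Qed.
Lemma g_pos N : gauge N -> forall j, 0 < N 'e_j. Proof. by case. Qed.

Lemma splus_scale N x : gauge N -> (forall i, 0 <= x ord0 i) -> 0 < N x ->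
  Splus N ((N x)^-1 *: x).
Proof.
move=> gN x0 Nx; split.
  by move=> i; rewrite mxE mulr_ge0 // invr_ge0 ltW.
by rewrite (g_sn gN).2 ger0_norm ?invr_ge0 ?ltW // mulVf // gt_eqF.
Qed.

Lemma splus_coord N x j : gauge N -> Splus N x -> `|x ord0 j| * N 'e_j <= 1.
Proof. by move=> gN [_ <-]; exact: g_lower. Qed.

Lemma sum_ge_term (I : finType) (f : I -> R) j : (forall i, 0 <= f i) ->
  f j <= \sum_i f i.
Proof.
move=> f0; rewrite (bigD1 j) //= lerDl; exact: sumr_ge0.
Qed.

Lemma inv_close (a e : R) : e <= 1/2 -> `|a - 1| <= e -> `|a^-1 - 1| <= 2 * e.
Proof.
move=> e12; rewrite ler_norml => /andP[h1 h2].
have a0 : 1/2 <= a by lra.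
have ap : 0 < a by lra.
have -> : a^-1 - 1 = (1 - a) * a^-1 by field; rewrite gt_eqF.
have ai : a * a^-1 = 1 by rewrite mulfV // gt_eqF.
have ai0 : 0 < a^-1 by rewrite invr_gt0.
rewrite normrM (gtr0_norm ai0).
have : `|1 - a| <= e by rewrite distrC ler_norml; apply/andP; split; lra.
have := normr_ge0 (1 - a); nra.
Qed.

Lemma scale_close nu (snu : seminorm nu) (a e K : R) z :
  e <= 1/2 -> `|a - 1| <= e -> `|z| <= K ->
  nu (a^-1 *: z - z) <= 2 * e * K * \sum_j nu 'e_j /\
  nu (z - a^-1 *: z) <= 2 * e * K * \sum_j nu 'e_j.
Proof.
move=> e12 ae zK.
have C0 : 0 <= \sum_j nu 'e_j by apply: sumr_ge0 => j _; exact: sn_ge0.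
have h : nu (a^-1 *: z - z) <= 2 * e * K * \sum_j nu 'e_j.
  rewrite -{2}(scale1r z) -scalerBl snu.2.
  have h1 := inv_close e12 ae.
  have h2 := sn_upper_norm snu z.
  have h3 := normr_ge0 (a^-1 - 1).
  have h4 := sn_ge0 snu z.
  have h5 := normr_ge0 z.
  have e0 : 0 <= e by apply: le_trans ae.
  apply: le_trans (ler_pM h3 h4 h1 h2) _.
  rewrite -mulrA ler_wpM2l ?mulr_ge0 //.
  by apply: ler_wpM2r.
by split => //; rewrite -opprB snN.
Qed.

Lemma box_compact (K : R) : compact [set x : V | `|x| <= K].
Proof.
apply: bounded_closed_compact.
  rewrite /bounded_set /= /bounded_near; near=> M => x /= Sx.
  apply: le_trans Sx _; near: M; apply: nbhs_pinfty_ge; exact: num_real.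
apply: (@preimage_closed V R (@Num.norm _ V) [set r : R | r <= K]); last exact: closed_le.
by move=> x _; exact: norm_continuous.
Unshelve. all: by end_near.
Qed.

Lemma uc (Fn : nat -> V -> R) F (K M : R) :
  (forall k, gauge (Fn k)) -> gauge F ->
  (forall x, Fn k x @[k --> \oo] --> F x) ->
  0 <= M -> \sum_j F 'e_j <= M ->
  (\forall k \near \oo, \sum_j Fn k 'e_j <= M) ->
  forall eta, 0 < eta -> \forall k \near \oo, forall x, `|x| <= K ->
    `|Fn k x - F x| <= eta.
Proof.
move=> gFn gF pc M0 FM FnM eta eta0.
set d := eta / (3 * (M + 1)).
have d0 : 0 < d by rewrite divr_gt0 // mulr_gt0 // ltr_wpDl.
have dM : d * M <= eta / 3.
  have M1 : M + 1 != 0 by rewrite gt_eqF // ltr_wpDl.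
  have -> : d * M = eta / 3 * (M / (M + 1)) by rewrite /d; field; rewrite M1.
  apply: ler_piMr; first by rewrite ltW // divr_gt0.
  by rewrite ler_pdivrMr ?ltr_wpDl // mul1r lerDl.
have Bc := @box_compact K; rewrite compact_cover in Bc.
have [D' D'B cov] : finite_subset_cover [set x : V | `|x| <= K] (fun g => ball g d)
    [set x : V | `|x| <= K].
  apply: Bc => [g _|x Bx]; first exact: ball_open.
  by exists x => //; exact: ballxx.
have e3 : 0 < eta / 3 by rewrite divr_gt0.
have hall : \forall k \near \oo, forall g : V, [set` D'] g -> `|F g - Fn k g| < eta / 3.
  have := @filter_bigI nat V D' (fun g => [set k | `|F g - Fn k g| < eta / 3]) _ _
    (fun g _ => @cvgr_dist_lt _ _ _ _ _ _ _ (pc g) _ e3).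
  move=> H; near=> k => g gD.
  have hk : (\bigcap_(i in [set` D']) [set k | `|F i - Fn k i| < eta / 3]) k.
    by near: k; exact: H.
  exact: hk.
near=> k.
have hallk : forall g : V, [set` D'] g -> `|F g - Fn k g| < eta / 3.
  by near: k; exact: hall.
have hM : \sum_j Fn k 'e_j <= M by near: k; exact: FnM.
move=> x xK.
have [g gD bgx] := cov x xK.
rewrite -ball_normE /= in bgx.
have hg := hallk g gD.
have l1 := sn_lip (g_sn (gFn k)) x g.
have l2 := sn_upper_norm (g_sn (gFn k)) (x - g).
have l3 := sn_lip (g_sn gF) g x.
have l4 := sn_upper_norm (g_sn gF) (g - x).
have nxg : `|x - g| = `|g - x| by rewrite distrC.
have S1 : 0 <= \sum_j Fn k 'e_j by apply: sumr_ge0 => j _; exact: ltW (g_pos (gFn k) j).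
have S2 : 0 <= \sum_j F 'e_j by apply: sumr_ge0 => j _; exact: ltW (g_pos gF j).
have p1 : `|x - g| * \sum_j Fn k 'e_j <= d * M.
  by rewrite nxg; apply: ler_pM => //; exact: ltW.
have p2 : `|g - x| * \sum_j F 'e_j <= d * M.
  by apply: ler_pM => //; exact: ltW.
move: l1 l3 hg; rewrite !ler_norml ltr_norml => /andP[a1 a2] /andP[b1 b2] /andP[c1 c2].
apply/andP; split; lra.
Unshelve. all: by end_near.
Qed.

Lemma dir1 (Fn : nat -> V -> R) F nu :
  (forall k, gauge (Fn k)) -> gauge F -> seminorm nu ->
  (forall x, Fn k x @[k --> \oo] --> F x) ->
  hausdorff nu (Splus (Fn k)) (Splus F) @[k --> \oo] --> 0%E.
Proof.
move=> gFn gF snu pc.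
have m0 := g_pos gF.
set M := \sum_j (F 'e_j + 1).
have M0 : 0 <= M by apply: sumr_ge0 => j _; rewrite addr_ge0 // ltW.
have FM : \sum_j F 'e_j <= M by apply: ler_sum => j _; rewrite lerDl.
set K := \sum_j 2 / F 'e_j.
have KK j : 2 / F 'e_j <= K.
  by apply: (@sum_ge_term _ (fun j => 2 / F 'e_j)) => i; rewrite ltW // divr_gt0.
have K0 : 0 <= K by apply: le_trans (KK 0); rewrite ltW // divr_gt0.
have E1 : \forall k \near \oo, forall j,
    F 'e_j / 2 <= Fn k 'e_j /\ Fn k 'e_j <= F 'e_j + 1.
  apply: filter_forall => j.
  have h1 := @cvgr_dist_lt _ _ _ _ _ _ _ (pc 'e_j) (F 'e_j / 2) (divr_gt0 (m0 j) (ltr0Sn _ 1)).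
  have h2 := @cvgr_dist_lt _ _ _ _ _ _ _ (pc 'e_j) 1 ltr01.
  near=> k.
  have a1 : `|F 'e_j - Fn k 'e_j| < F 'e_j / 2 by near: k; exact: h1.
  have a2 : `|F 'e_j - Fn k 'e_j| < 1 by near: k; exact: h2.
  move: a1 a2; rewrite !ltr_norml => /andP[? ?] /andP[? ?]; split; lra.
have FnM : \forall k \near \oo, \sum_j Fn k 'e_j <= M.
  by apply: filterS E1 => k hk; apply: ler_sum => j _; case: (hk j).
have KbF : forall x, Splus F x -> `|x| <= K.
  move=> x Sx; apply: norm_le => // j; apply: le_trans (KK j).
  have := splus_coord j gF Sx; have := m0 j => ? ?.
  rewrite ler_pdivlMr //; have := normr_ge0 (x ord0 j); nra.
set C0 := \sum_j nu 'e_j.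
have C00 : 0 <= C0 by apply: sumr_ge0 => j _; exact: sn_ge0.
apply: cv_to0 => e e0.
set eta := Num.min (1/2) (e / (2 * K * C0 + 1)).
have D0 : 0 < 2 * K * C0 + 1 by rewrite ltr_wpDl // mulr_ge0 // mulr_ge0.
have eta0 : 0 < eta.
  rewrite lt_min; apply/andP; split; [lra|exact: divr_gt0].
have eta12 : eta <= 1/2 by rewrite ge_min lexx.
have etae : 2 * eta * K * C0 <= e.
  have : eta <= e / (2 * K * C0 + 1) by rewrite ge_min lexx orbT.
  rewrite ler_pdivlMr // => h.
  have : 0 <= eta * (2 * K * C0).
    by apply: mulr_ge0; [exact: ltW|apply: mulr_ge0 => //; apply: mulr_ge0].
  nra.
have y0 : Splus F ((F 'e_0)^-1 *: 'e_(0 : 'I_n.+1)).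
  apply: splus_scale => // i; rewrite mxE; case: (_ && _) => //=.
have U := uc K gFn gF pc M0 FM FnM eta0.
near=> k.
have Uk : forall x, `|x| <= K -> `|Fn k x - F x| <= eta by near: k; exact: U.
have E1all : forall j, F 'e_j / 2 <= Fn k 'e_j /\ Fn k 'e_j <= F 'e_j + 1.
  by near: k; exact: E1.
have E1k j : F 'e_j / 2 <= Fn k 'e_j by case: (E1all j).
apply/andP; split; first exact: (@haus_ge0 R n nu (sn_ge0 snu) _ _ _ y0).
apply: (@haus_le R n nu (Splus (Fn k)) (Splus F) e).
- move=> y [y0' Fy].
  have yK := KbF y (conj y0' Fy).
  have hy := Uk y yK; rewrite Fy in hy.
  have a0 : 0 < Fn k y.
    by move: hy; rewrite ler_norml => /andP[? ?]; lra.
  exists ((Fn k y)^-1 *: y); first exact: splus_scale.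
  have [h _] := scale_close snu eta12 hy yK.
  exact: le_trans h _.
- move=> x [x0 Fx].
  have xK : `|x| <= K.
    apply: norm_le => // j; apply: le_trans (KK j).
    have := splus_coord j (gFn k) (conj x0 Fx); have := m0 j; have := E1k j => ? ? ?.
    rewrite ler_pdivlMr //; have := normr_ge0 (x ord0 j); nra.
  have hx := Uk x xK; rewrite Fx distrC in hx.
  have b0 : 0 < F x.
    by move: hx; rewrite ler_norml => /andP[? ?]; lra.
  exists ((F x)^-1 *: x); first exact: splus_scale.
  have [_ h] := scale_close snu eta12 hx xK.
  exact: le_trans h _.
Unshelve. all: by end_near.
Qed.

Lemma dir2 (Fn : nat -> V -> R) F nu :
  (forall k, gauge (Fn k)) -> gauge F -> seminorm nu ->
  (forall x, nu x = 0 -> x = 0) ->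
  hausdorff nu (Splus (Fn k)) (Splus F) @[k --> \oo] --> 0%E ->
  forall x, Fn k x @[k --> \oo] --> F x.
Proof.
move=> gFn gF snu dnu hc x.
have [c c0 cl] := nu_lower snu dnu.
have hc' := @cv_from0 R _ hc.
have m0 := g_pos gF.
have Bd : \forall k \near \oo, forall j, Fn k 'e_j <= 2 * F 'e_j.
  apply: filter_forall => j.
  set m := F 'e_j.
  have mm : m * m^-1 = 1 by rewrite mulfV // gt_eqF // m0.
  have mi0 : 0 < m^-1 by rewrite invr_gt0 m0.
  have ej0 : forall i, 0 <= ('e_j : V) ord0 i.
    by move=> i; rewrite mxE; case: (_ && _).
  have Sy := splus_scale gF ej0 (m0 j).
  have e0 : 0 < c / (2 * m) by rewrite divr_gt0 // mulr_gt0 // m0.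
  have H := hc' _ e0.
  near=> k.
  have hk : (hausdorff nu (Splus (Fn k)) (Splus F) < (c / (2 * m))%:E)%E.
    by near: k; exact: H.
  have [z [z0 Fz] nz] := @haus_lt _ _ nu _ _ _ _ hk Sy.
  have cz := cl (z - (F 'e_j)^-1 *: 'e_j).
  have cj := coord_le (z - (F 'e_j)^-1 *: 'e_j) j.
  rewrite !mxE !eqxx /= mulr1 in cj.
  have t1 : c * `|z ord0 j - m^-1| < c / (2 * m).
    apply: le_lt_trans nz; apply: le_trans cz; rewrite ler_pM2l //.
  have t2 : `|z ord0 j - m^-1| < 1 / 2 * m^-1.
    have mn : m != 0 by rewrite gt_eqF // m0.
    have e1 : c / (2 * m) = c * (1 / 2 * m^-1) by field.
    by rewrite e1 ltr_pM2l in t1.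
  have zj : 1 / 2 * m^-1 <= `|z ord0 j|.
    move: t2; rewrite ltr_norml => /andP[a _].
    have := ler_norm (z ord0 j); lra.
  have sc := splus_coord j (gFn k) (conj z0 Fz).
  have Fe0 := ltW (g_pos (gFn k) j).
  have t3 : 1 / 2 * m^-1 * Fn k 'e_j <= 1.
    by apply: le_trans sc; apply: ler_wpM2r.
  have t4 : m^-1 * Fn k 'e_j <= 2 by lra.
  have -> : Fn k 'e_j = m * (m^-1 * Fn k 'e_j) by rewrite mulrA mm mul1r.
  by rewrite mulrC ler_wpM2r // ltW // m0.
set M2 := \sum_j 2 * F 'e_j.
have M20 : 0 <= M2 by apply: sumr_ge0 => j _; rewrite mulr_ge0 // ltW.
have [Fx0|Fxn] := eqVneq (F x) 0.
  have x0 := g_eq0 gF Fx0.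
  rewrite x0 (sn0 (g_sn gF)).
  have -> : (fun k => Fn k 0) = fun _ => 0.
    by apply: funext => k; rewrite (sn0 (g_sn (gFn k))).
  exact: cvg_cst.
have a0 : 0 < F x by rewrite lt_def Fxn /=; exact: sn_ge0 (g_sn gF) x.
set ax := map_mx Num.norm x.
have Fax : F ax = F x by rewrite g_abs.
have ax0 : forall i, 0 <= ax ord0 i by move=> i; rewrite mxE normr_ge0.
have Fax0 : 0 < F ax by rewrite Fax.
have Sy := splus_scale gF ax0 Fax0.
rewrite Fax in Sy.
set y := (F x)^-1 *: ax in Sy.
have axy : ax = F x *: y by rewrite /y scalerA mulfV ?gt_eqF // scale1r.
apply/cvgrPdist_lt => e e0.
set e' := e * c / (F x * (M2 + 1)).
have M21 : 0 < M2 + 1 by rewrite ltr_wpDl.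
have e'0 : 0 < e' by rewrite divr_gt0 ?mulr_gt0.
have H := hc' _ e'0.
near=> k.
have hk : (hausdorff nu (Splus (Fn k)) (Splus F) < e'%:E)%E by near: k; exact: H.
have Bdk : forall j, Fn k 'e_j <= 2 * F 'e_j by near: k; exact: Bd.
have sB : \sum_j Fn k 'e_j <= M2 by apply: ler_sum => j _; exact: Bdk.
have [z [z0 Fz] nz] := @haus_lt _ _ nu _ _ _ _ hk Sy.
have cz := cl (z - y).
have l1 := sn_lip (g_sn (gFn k)) y z.
have l2 := sn_upper_norm (g_sn (gFn k)) (y - z).
have nyz : `|y - z| = `|z - y| by rewrite distrC.
rewrite Fz in l1.
have Fnx : Fn k x = F x * Fn k y.
  by rewrite -(g_abs (gFn k)) -/ax axy (g_sn (gFn k)).2 gtr0_norm.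
rewrite Fnx.
have t1 : `|z - y| < e / (F x * (M2 + 1)).
  have : c * `|z - y| < c * (e / (F x * (M2 + 1))).
    have ee : e' = c * (e / (F x * (M2 + 1))) by rewrite /e'; ring.
    by rewrite -ee; exact: le_lt_trans cz nz.
  by rewrite ltr_pM2l.
have t2 : `|z - y| * (F x * (M2 + 1)) < e.
  by rewrite -ltr_pdivlMr ?mulr_gt0.
have S1 : 0 <= \sum_j Fn k 'e_j by apply: sumr_ge0 => j _; exact: ltW (g_pos (gFn k) j).
have t3 : `|1 - Fn k y| <= `|z - y| * M2.
  rewrite distrC; apply: le_trans l1 _; apply: le_trans l2 _; rewrite nyz.
  by apply: ler_wpM2l.
have -> : F x - F x * Fn k y = F x * (1 - Fn k y) by rewrite mulrBr mulr1.
rewrite normrM gtr0_norm //.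
have t4 := normr_ge0 (z - y).
have t5 := normr_ge0 (1 - Fn k y).
nra.
Unshelve. all: by end_near.
Qed.


End Main.

Section BigMax.
Variable R : realType.

Lemma bigmax_ge_base (I : finType) (x0 : R) (F : I -> R) :
  x0 <= \big[Num.max/x0]_i F i.
Proof. by apply/bigmax_geP; left. Qed.

Lemma bigmax_ge_term (I : finType) (x0 : R) (F : I -> R) j :
  F j <= \big[Num.max/x0]_i F i.
Proof. by apply/bigmax_geP; right; exists j. Qed.

Lemma bigmax_mull (I : finType) (c x0 : R) (F : I -> R) : 0 <= c ->
  \big[Num.max/c * x0]_i (c * F i) = c * \big[Num.max/x0]_i F i.
Proof.
move=> c0; elim/big_rec2: _ => // i y1 y2 _ ->.
by rewrite maxr_pMr.
Qed.

Lemma bigmax_mono (I : finType) (x0 y0 : R) (F G : I -> R) :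
  x0 <= y0 -> (forall i, F i <= G i) ->
  \big[Num.max/x0]_i F i <= \big[Num.max/y0]_i G i.
Proof.
move=> xy FG; elim/big_rec2: _ => // i a b _ ab.
rewrite ge_max !le_max FG ab /=; by rewrite orbT.
Qed.

Lemma measurable_bigmax dT (T : measurableType dT) (c : R) (I : finType)
  (g : I -> T -> R) : (forall i, measurable_fun setT (g i)) ->
  measurable_fun setT (fun w => \big[Num.max/c]_i g i w).
Proof.
move=> mg.
have H : forall s : seq I, measurable_fun setT (fun w => \big[Num.max/c]_(i <- s) g i w).
  elim => [|i s IH].
    by under eq_fun do rewrite big_nil; exact: measurable_cst.
  by under eq_fun do rewrite big_cons; exact: measurable_maxr.
exact: H.
Qed.

End BigMax.

Section Meas.
Variables (R : realType) (d : nat).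
Local Notation V := 'rV[R]_d.+1.

Lemma Fnorm_gauge (N : V -> R) : is_Fnorm N -> gauge N.
Proof.
case=> dT [T [P [X [HX HN]]]].
pose f (x : V) w := \big[Num.max/`|x ord0 ord0|]_(i < d)
                   (`|x ord0 (lift ord0 i)| * X i w).
have mX i : measurable_fun setT (X i) by case: (HX i).
have aeX : {ae P, forall w, forall i, 0 <= X i w}.
  by apply: filter_forall => i; case: (HX i).
have f0 x w : 0 <= f x w by apply: le_trans (bigmax_ge_base _ _).
have mf x : measurable_fun setT (fun w => (f x w)%:E).
  apply/measurable_EFinP; apply: measurable_bigmax => i.
  by apply: measurable_funM => //; exact: measurable_cst.
have HN' x : (N x)%:E = (\int[P]_w (f x w)%:E)%E by rewrite HN /Fnorm_of unlock.
have hom : forall (a : R) x, N (a *: x) = `|a| * N x.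
  move=> a x; apply/eqP; rewrite -eqe EFinM !HN'.
  have -> : (fun w => (f (a *: x) w)%:E) = (fun w => (`|a|%:E * (f x w)%:E)%E).
    apply: funext => w; rewrite -EFinM; congr (_%:E).
    rewrite /f mxE normrM -bigmax_mull //; apply: eq_bigr => i _.
    by rewrite mxE normrM mulrA.
  by apply/eqP; rewrite ge0_integralZl_EFin // => w _; rewrite lee_fin.
have sub : forall x y, N (x + y) <= N x + N y.
  move=> x y; rewrite -lee_fin EFinD !HN'.
  rewrite -ge0_integralD //; try by move=> w _; rewrite lee_fin.
  apply: ae_ge0_le_integral => //.
  - by move=> w _; rewrite lee_fin.
  - by move=> w _; rewrite adde_ge0 // lee_fin.
  - by apply: emeasurable_funD.
  apply: filterS aeX => w Xw _; rewrite -EFinD lee_fin.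
  apply: bigmax_le => [|i _].
    rewrite mxE; apply: le_trans (ler_normD _ _) _.
    by apply: lerD; exact: bigmax_ge_base.
  rewrite mxE; apply: (@le_trans _ _ ((`|x ord0 (lift ord0 i)| + `|y ord0 (lift ord0 i)|) * X i w)).
    by apply: ler_wpM2r => //; exact: ler_normD.
  by rewrite mulrDl; apply: lerD; exact: (bigmax_ge_term _ (fun i => _ * X i w) i).
have mono : forall x y : V, (forall j, `|x ord0 j| <= `|y ord0 j|) -> N x <= N y.
  move=> x y xy; rewrite -lee_fin !HN'.
  apply: ae_ge0_le_integral => //.
  - by move=> w _; rewrite lee_fin.
  - by move=> w _; rewrite lee_fin.
  apply: filterS aeX => w Xw _; rewrite lee_fin.
  by apply: bigmax_mono => // i; apply: ler_wpM2r.
split; [by split | exact: mono | ].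
move=> j; case: (unliftP ord0 j) => [i ->|->].
  set e := ('e_(lift ord0 i) : V).
  have e00 : e ord0 ord0 = 0.
    by rewrite mxE eqxx.
  have eE k : e ord0 (lift ord0 k) = (i == k)%:R.
    by rewrite mxE eqxx /= (inj_eq lift_inj) eq_sym.
  rewrite -lte_fin HN'.
  have -> : (\int[P]_w (f e w)%:E = \int[P]_w (X i w)%:E)%E.
    apply: ae_eq_integral => //; first exact/measurable_EFinP.
    apply: filterS aeX => w Xw _; congr (_%:E).
    apply/le_anti/andP; split.
      apply: bigmax_le => [|k _]; first by rewrite e00 normr0.
      by rewrite eE; case: eqP => [->|_]; rewrite ?normr1 ?mul1r ?normr0 ?mul0r.
    apply: le_trans (bigmax_ge_term _ (fun k => `|e ord0 (lift ord0 k)| * X k w) i).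
    by rewrite /= eE eqxx normr1 mul1r.
  by case: (HX i) => _ _ _; rewrite unlock.
set e := ('e_(ord0) : V).
have e00 : e ord0 ord0 = 1 by rewrite mxE eqxx.
have eE k : e ord0 (lift ord0 k) = 0 by rewrite mxE eqxx.
have f1 w : f e w = 1.
  apply/le_anti/andP; split.
    by apply: bigmax_le => [|k _]; rewrite ?e00 ?normr1 // eE normr0 mul0r.
  by apply: le_trans (bigmax_ge_base _ _); rewrite e00 normr1.
rewrite -lte_fin HN'.
under eq_integral do rewrite f1.
have h := expectation_cst P 1; rewrite unlock /= in h.
by rewrite h lte01.
Qed.

End Meas.
Unset Implicit Arguments.

Theorem theorem6p4 (R : realType) (d : nat)
  (Fn : nat -> 'rV[R]_(d.+1) -> R) (F : 'rV[R]_(d.+1) -> R) :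
  (forall n, is_Fnorm (Fn n)) -> is_Fnorm F ->
  forall nu : 'rV[R]_(d.+1) -> R, is_norm nu ->
  ((forall x : 'rV[R]_(d.+1), (fun n => Fn n x) @ \oo --> F x) <->
   ((fun n => hausdorff nu (Splus (Fn n)) (Splus F)) @ \oo --> 0%E)).
Proof.
move=> hFn hF nu [tri hom def].
have gFn k := Fnorm_gauge (hFn k).
have gF := Fnorm_gauge hF.
have snu : seminorm nu by split.
split; [exact: dir1 | exact: dir2].
Qed.
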